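(* Let $\eta>0,\lambda>0$ with $\eta\lambda<1$, let $x(t)\ne0$ and $x(t+1)=(1-\eta\lambda)x(t)-\eta\nabla L(x(t))$. Then $$L(x(t))-L(x(t+1))\ge \eta\left(\frac{1}{1-\eta\lambda}-\frac{\rho\eta}{2\|x(t)\|_2^2(1-\eta\lambda)^2}\right)\|\nabla L(x(t))\|_2^2 .$$ If moreover $\eta\lambda\le\tfrac12$, then $$L(x(t))-L(x(t+1))\ge \eta\left(1-\frac{2\rho\eta}{\|x(t)\|_2^2}\right)\|\nabla L(x(t))\|_2^2 .$$
   Context: $L:\mathbb{R}^d\setminus\{0\}\to\mathbb{R}$ is $C^2$ and scale invariant, i.e. $L(cx)=L(x)$ for all $c>0$ and $x\neq0$. $\rho:=\max_{\|x\|_2=1}\|\nabla^2L(x)\|_2$ (spectral norm). *)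

(* Defs.v *)
From HB Require Import structures.
From mathcomp Require Import all_boot all_order all_algebra.
From mathcomp Require Import all_classical all_reals all_analysis.
Set Implicit Arguments. Unset Strict Implicit. Unset Printing Implicit Defensive.
Import Order.TTheory GRing.Theory Num.Theory.
Import numFieldNormedType.Exports.
Local Open Scope classical_set_scope.
Local Open Scope ring_scope.

Section Defs.
Variables (R : realType) (d : nat).

Definition ebasis (i : 'I_d) : 'rV[R]_d := delta_mx 0 i.

Definition enorm (v : 'rV[R]_d) : R := Num.sqrt (\sum_i v 0 i ^+ 2).

Definition grad (L : 'rV[R]_d -> R) (x : 'rV[R]_d) : 'rV[R]_d :=
  \row_i ('D_(ebasis i) L x).

Definition hess (L : 'rV[R]_d -> R) (x : 'rV[R]_d) : 'M[R]_d :=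
  \matrix_(i, j) ('D_(ebasis j) (fun y => 'D_(ebasis i) L y) x).

Definition specnorm (A : 'M[R]_d) : R :=
  sup [set enorm (u *m A^T) | u in [set u : 'rV[R]_d | enorm u = 1]].

Definition C2_off0 (L : 'rV[R]_d -> R) : Prop :=
  forall x : 'rV[R]_d, x != 0 ->
    [/\ differentiable L x,
        (forall i, differentiable (fun y => 'D_(ebasis i) L y) x)
      & {for x, continuous (hess L)}].

Definition scale_invariant (L : 'rV[R]_d -> R) : Prop :=
  forall (c : R) (x : 'rV[R]_d), 0 < c -> x != 0 -> L (c *: x) = L x.

(* rho := max_{||x||_2 = 1} ||hess L x||_2 (written as a sup; the max is attained
   since the Hessian is continuous on the compact unit sphere) *)
Definition rho (L : 'rV[R]_d -> R) : R :=
  sup [set specnorm (hess L x) | x in [set x : 'rV[R]_d | enorm x = 1]].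

End Defs.

(* Main.v *)
Require Import Defs.
From HB Require Import structures.
From mathcomp Require Import all_boot all_order all_algebra.
From mathcomp Require Import all_classical all_reals all_analysis.
From mathcomp Require Import ring lra.
Import Order.TTheory GRing.Theory Num.Theory.
Import numFieldNormedType.Exports.
Local Open Scope ring_scope.

Definition dotp {R : realType} {d : nat} (u v : 'rV[R]_d) : R :=
  \sum_i u 0 i * v 0 i.

Lemma dotpC {R : realType} {d : nat} (u v : 'rV[R]_d) : dotp u v = dotp v u.
Proof. by apply: eq_bigr => i _; rewrite mulrC. Qed.

Lemma dotp_ge0 {R : realType} {d : nat} (u : 'rV[R]_d) : 0 <= dotp u u.
Proof. by apply: sumr_ge0 => i _; rewrite -expr2 sqr_ge0. Qed.

Lemma enorm_sq {R : realType} {d : nat} (u : 'rV[R]_d) :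
  enorm u ^+ 2 = dotp u u.
Proof.
rewrite /enorm sqr_sqrtr; last by apply: sumr_ge0 => i _; rewrite sqr_ge0.
by apply: eq_bigr => i _; rewrite expr2.
Qed.

Lemma enorm_ge0 {R : realType} {d : nat} (u : 'rV[R]_d) : 0 <= enorm u.
Proof. exact: sqrtr_ge0. Qed.

Lemma dotp_eq0 {R : realType} {d : nat} (u : 'rV[R]_d) : dotp u u = 0 -> u = 0.
Proof.
move=> /eqP; rewrite psumr_eq0; last by move=> i _; rewrite -expr2 sqr_ge0.
move=> /allP H; apply/rowP => i; rewrite mxE.
have := H i (mem_index_enum i); rewrite /= -expr2 sqrf_eq0 => /eqP //.
Qed.

Lemma enorm_eq0 {R : realType} {d : nat} (u : 'rV[R]_d) : enorm u = 0 -> u = 0.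
Proof. by move=> h; apply: dotp_eq0; rewrite -enorm_sq h expr0n. Qed.

Lemma enorm_gt0 {R : realType} {d : nat} (u : 'rV[R]_d) : u != 0 -> 0 < enorm u.
Proof.
move=> u0; rewrite lt_neqAle enorm_ge0 andbT; apply/eqP => h.
by move: u0; rewrite (@enorm_eq0 _ _ u (esym h)) eqxx.
Qed.

Lemma dotpZl {R : realType} {d : nat} (c : R) (u v : 'rV[R]_d) :
  dotp (c *: u) v = c * dotp u v.
Proof. by rewrite /dotp mulr_sumr; apply: eq_bigr => i _; rewrite mxE mulrA. Qed.

Lemma dotpZr {R : realType} {d : nat} (c : R) (u v : 'rV[R]_d) :
  dotp u (c *: v) = c * dotp u v.
Proof. by rewrite dotpC dotpZl dotpC. Qed.

Lemma dotpDl {R : realType} {d : nat} (u w v : 'rV[R]_d) :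
  dotp (u + w) v = dotp u v + dotp w v.
Proof. by rewrite /dotp -big_split; apply: eq_bigr => i _; rewrite mxE mulrDl. Qed.

Lemma dotpNl {R : realType} {d : nat} (u v : 'rV[R]_d) :
  dotp (- u) v = - dotp u v.
Proof. by rewrite -scaleN1r dotpZl mulN1r. Qed.

Lemma dotpNr {R : realType} {d : nat} (u v : 'rV[R]_d) :
  dotp u (- v) = - dotp u v.
Proof. by rewrite dotpC dotpNl dotpC. Qed.

Lemma dotpDr {R : realType} {d : nat} (u w v : 'rV[R]_d) :
  dotp v (u + w) = dotp v u + dotp v w.
Proof. by rewrite dotpC dotpDl !(dotpC v). Qed.

Lemma enormZ {R : realType} {d : nat} (c : R) (u : 'rV[R]_d) :
  enorm (c *: u) = `|c| * enorm u.
Proof.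
have h : enorm (c *: u) ^+ 2 = (`|c| * enorm u) ^+ 2.
  by rewrite exprMn real_normK ?num_real // !enorm_sq dotpZl dotpZr mulrA -expr2.
have := h; move/eqP; rewrite eqf_sqr => /orP [/eqP //|/eqP h2].
have : 0 <= enorm (c *: u) by apply: enorm_ge0.
have : 0 <= `|c| * enorm u by apply: mulr_ge0 => //; apply: enorm_ge0.
rewrite h2 => a b; apply/eqP; rewrite eq_le; apply/andP; split; lra.
Qed.

Lemma dotp_le {R : realType} {d : nat} (u v : 'rV[R]_d) :
  dotp u v <= enorm u * enorm v.
Proof.
have [->|u0] := eqVneq u 0.
  by rewrite /dotp big1 ?mulr_ge0 ?enorm_ge0 // => i _; rewrite mxE mul0r.
have [->|v0] := eqVneq v 0.
  by rewrite /dotp big1 ?mulr_ge0 ?enorm_ge0 // => i _; rewrite mxE mulr0.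
set a := enorm u; set b := enorm v.
have a0 : 0 < a by apply: enorm_gt0.
have b0 : 0 < b by apply: enorm_gt0.
have Hu : dotp u u = a ^+ 2 by rewrite enorm_sq.
have Hv : dotp v v = b ^+ 2 by rewrite enorm_sq.
have H : 0 <= dotp (b *: u - a *: v) (b *: u - a *: v) by apply: dotp_ge0.
have E : dotp (b *: u - a *: v) (b *: u - a *: v) =
   2 * (a * b) * (a * b - dotp u v).
  rewrite dotpDl !dotpDr !dotpNl !dotpNr !dotpZl !dotpZr (dotpC v u) Hu Hv.
  by ring.
rewrite E in H.
have ab : 0 < a * b by apply: mulr_gt0.
have : 0 <= (a * b) * (a * b - dotp u v) by nra.
by rewrite pmulr_rge0 // subr_ge0.
Qed.


Lemma enorm_ebasis {R : realType} {d : nat} (i : 'I_d) :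
  enorm (ebasis R i) = 1.
Proof.
rewrite /enorm (bigD1 i) //= big1 ?addr0.
  by rewrite /ebasis mxE !eqxx /= expr1n sqrtr1.
by move=> j ji; rewrite /ebasis mxE eqxx /= (negbTE ji) /= expr0n.
Qed.

Lemma coord_le1 {R : realType} {d : nat} (u : 'rV[R]_d) i :
  enorm u = 1 -> `|u 0 i| <= 1.
Proof.
move=> h.
have : u 0 i * u 0 i <= 1.
  have := enorm_sq u; rewrite h expr1n /dotp (bigD1 i) //= => ->.
  rewrite lerDl; apply: sumr_ge0 => j _; rewrite -expr2 sqr_ge0 //.
move=> H; rewrite ler_norml; apply/andP; split; nra.
Qed.

Definition Bnd {R : realType} {d : nat} (A : 'M[R]_d) : R :=
  \sum_j (\sum_i `|A j i|) ^+ 2.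

Lemma specset_bound {R : realType} {d : nat} (A : 'M[R]_d) (u : 'rV[R]_d) :
  enorm u = 1 -> enorm (u *m A^T) <= Num.sqrt (Bnd A).
Proof.
move=> h; rewrite /enorm /Bnd; apply: ler_wsqrtr; apply: ler_sum => j _.
have e : (u *m A^T) 0 j = \sum_i u 0 i * A j i.
  by rewrite mxE; apply: eq_bigr => i _; rewrite mxE.
have b : `|(u *m A^T) 0 j| <= \sum_i `|A j i|.
  rewrite e; apply: le_trans (ler_norm_sum _ _ _) _; apply: ler_sum => i _.
  rewrite normrM; apply: ler_piMl => //; exact: coord_le1.
rewrite -(real_normK (num_real ((u *m A^T) 0 j))).
have := normr_ge0 ((u *m A^T) 0 j); nra.
Qed.

Lemma specset_ub {R : realType} {d : nat} (A : 'M[R]_d) :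
  has_ubound [set enorm (u *m A^T) | u in [set u : 'rV[R]_d | enorm u = 1]].
Proof.
by exists (Num.sqrt (Bnd A)) => _ [u /= hu <-]; apply: specset_bound.
Qed.

Lemma specnorm_ge {R : realType} {d : nat} (A : 'M[R]_d) (u : 'rV[R]_d) :
  enorm u = 1 -> enorm (u *m A^T) <= specnorm A.
Proof. by move=> hu; apply: (ub_le_sup (specset_ub A)); exists u. Qed.

Lemma specnorm_le {R : realType} {d : nat} (A : 'M[R]_d) :
  (0 < d)%N -> specnorm A <= Num.sqrt (Bnd A).
Proof.
move=> d0; apply: ge_sup.
  exists (enorm (ebasis R (Ordinal d0) *m A^T)); exists (ebasis R (Ordinal d0)) => //.
  exact: enorm_ebasis.
by move=> _ [u /= hu <-]; apply: specset_bound.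
Qed.

Lemma specnorm_ge0 {R : realType} {d : nat} (A : 'M[R]_d) :
  (0 < d)%N -> 0 <= specnorm A.
Proof.
move=> d0; have h := specnorm_ge A _ (@enorm_ebasis R d (Ordinal d0)).
have h0 := enorm_ge0 (ebasis R (Ordinal d0) *m A^T).
exact: (le_trans h0 h).
Qed.

Lemma quad_le {R : realType} {d : nat} (A : 'M[R]_d) (g : 'rV[R]_d) :
  dotp g (g *m A^T) <= enorm g ^+ 2 * specnorm A.
Proof.
have [->|g0] := eqVneq g 0.
  have e0 : enorm (0:'rV[R]_d) = 0.
    by rewrite /enorm big1 ?sqrtr0 // => i _; rewrite mxE expr2 mul0r.
  rewrite mul0mx e0 expr2 !mul0r /dotp big1 // => i _; by rewrite mxE mul0r.
set n := enorm g.
have n0 : 0 < n by apply: enorm_gt0.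
set u := n^-1 *: g.
have hu : enorm u = 1.
  by rewrite enormZ ger0_norm ?invr_ge0 ?ltW // mulVf // gt_eqF.
have gu : g = n *: u by rewrite /u scalerA mulfV ?gt_eqF // scale1r.
rewrite {1 2}gu -scalemxAl dotpZl dotpZr mulrA -expr2.
rewrite ler_pM2l; last by rewrite exprn_gt0.
apply: le_trans (dotp_le _ _) _; rewrite hu mul1r; exact: specnorm_ge.
Qed.


Lemma line_quot {R : realType} {d : nat} (F : 'rV[R]_d -> R) a v (s : R) :
  (fun h : R => h^-1 *: (((fun t : R => F (a + t *: v)) \o shift s) (h *: 1)
      - (fun t : R => F (a + t *: v)) s))
  = (fun h : R => h^-1 *: ((F \o shift (a + s *: v)) (h *: v) - F (a + s *: v))).
Proof.
apply/funext => h /=; rewrite /shift /=; congr (_ *: (F _ - _)).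
by rewrite -[h *: 1]/(h * 1) mulr1 scalerDl addrCA.
Qed.

Lemma derivable_line {R : realType} {d : nat} (F : 'rV[R]_d -> R) a v (s : R) :
  derivable F (a + s *: v) v -> derivable (fun t : R => F (a + t *: v)) s 1.
Proof. by rewrite /derivable line_quot. Qed.

Lemma derive_line {R : realType} {d : nat} (F : 'rV[R]_d -> R) a v (s : R) :
  'D_1 (fun t : R => F (a + t *: v)) s = 'D_v F (a + s *: v).
Proof. by rewrite /derive line_quot. Qed.

Lemma scale_quot {R : realType} {d : nat} (F : 'rV[R]_d -> R) (c : R) a v :
  (fun h : R => h^-1 *: (((fun w => F (c *: w)) \o shift a) (h *: v)
      - (fun w => F (c *: w)) a))
  = (fun h : R => h^-1 *: ((F \o shift (c *: a)) (h *: (c *: v)) - F (c *: a))).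
Proof.
apply/funext => h /=; rewrite /shift /=; congr (_ *: (F _ - _)).
by rewrite scalerDr !scalerA mulrC.
Qed.

Lemma derive_scale {R : realType} {d : nat} (F : 'rV[R]_d -> R) (c : R) a v :
  'D_v (fun w => F (c *: w)) a = 'D_(c *: v) F (c *: a).
Proof. by rewrite /derive scale_quot. Qed.

Lemma derive_partials {R : realType} {d : nat} (F : 'rV[R]_d -> R) a v :
  differentiable F a ->
  'D_v F a = \sum_i v 0 i * 'D_(ebasis R i) F a.
Proof.
move=> dF; rewrite deriveE // {1}(row_sum_delta v) linear_sum.
apply: eq_bigr => i _; rewrite linearZ /= deriveE //.
Qed.

Lemma deriveZdir {R : realType} {d : nat} (F : 'rV[R]_d -> R) (c : R) a v :
  differentiable F a -> 'D_(c *: v) F a = c * 'D_v F a.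
Proof. by move=> dF; rewrite !deriveE // linearZ. Qed.

Lemma near_neq0 {R : realType} {d : nat} (x : 'rV[R]_d) :
  x != 0 -> \forall y \near x, y != 0.
Proof. move=> x0. have := @cvgr_neq0 _ _ _ (nbhs x) _ id x. apply. exact: cvg_id. exact x0. Qed.

Lemma deriv_scale_inv {R : realType} {d : nat} (L : 'rV[R]_d -> R) (c : R) w v :
  scale_invariant L -> 0 < c -> w != 0 -> differentiable L (c *: w) ->
  'D_v L (c *: w) = c^-1 * 'D_v L w.
Proof.
move=> sL c0 w0 dL.
have E : 'D_v L w = 'D_v (fun y => L (c *: y)) w.
  apply: near_eq_derive; near=> y; rewrite sL //.
  near: y; exact: near_neq0.
rewrite E derive_scale deriveZdir // mulrA mulVf ?gt_eqF // mul1r.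
Unshelve. all: by end_near. Qed.

Lemma hess_scale {R : realType} {d : nat} (L : 'rV[R]_d -> R) (c : R) y :
  C2_off0 L -> scale_invariant L -> 0 < c -> y != 0 ->
  hess L (c *: y) = (c ^+ 2)^-1 *: hess L y.
Proof.
move=> CL sL c0 y0.
have cy0 : c *: y != 0 by rewrite scaler_eq0 negb_or gt_eqF.
apply/matrixP => i j; rewrite !mxE.
set p := fun w => 'D_(ebasis R i) L w.
have dp : forall w, w != 0 -> differentiable p w.
  by move=> w w0; have [_ H _] := CL w w0; exact: H.
have E : 'D_(ebasis R j) (fun w => p (c *: w)) y =
         'D_(ebasis R j) (c^-1 \*: p) y.
  apply: near_eq_derive; near=> w.
  have w0 : w != 0 by near: w; exact: near_neq0.
  have cw0 : c *: w != 0 by rewrite scaler_eq0 negb_or gt_eqF.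
  rewrite /p /= deriv_scale_inv //; have [H _ _] := CL _ cw0; exact: H.
move: E; rewrite derive_scale deriveZdir; last exact: dp.
rewrite deriveZ; last by apply: diff_derivable; exact: dp.
have cn0 : c != 0 by rewrite gt_eqF.
move=> E; apply: (mulfI cn0); rewrite E.
rewrite -[_ *: 'D_(ebasis R j) p y]/(c^-1 * 'D_(ebasis R j) p y).
by field.
Unshelve. all: by end_near. Qed.


Lemma poly_der {R : realType} (a b s : R) (f : R -> R) df :
  is_derive s 1 f df ->
  is_derive s 1 (fun t : R => a * t + b * t ^+ 2 - f t) (a + 2 * b * s - df).
Proof.
move=> hf.
have -> : (fun t : R => a * t + b * t ^+ 2 - f t) =
   (cst a * id + cst b * (id ^+ 2) - f) by apply/funext => t.
apply: is_derive_eq.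
rewrite /cst /= !scaler0 !addr0 expr1.
rewrite -[a%:A]/(a * 1) -[(2 * s)%:A]/((2*s) * 1).
rewrite -[b *: _]/(b * _).
by rewrite !mulr1 mulrA (mulrC b 2).
Qed.

Lemma mono {R : realType} (f df : R -> R) (a b : R) :
  (forall s : R, is_derive s 1 f (df s)) -> (forall s, a < s < b -> 0 <= df s) ->
  a <= b -> f a <= f b.
Proof.
move=> hd hp ab.
apply: (@ger0_derive1_ndecr R f a b) => //.
- by move=> s; rewrite in_itv /= => hs; rewrite derive1E derive_val; exact: hp.
- by apply: derivable_within_continuous => s _.
Qed.

Lemma enorm0 {R : realType} {d : nat} : enorm (0 : 'rV[R]_d) = 0.
Proof. by rewrite /enorm big1 ?sqrtr0 // => i _; rewrite mxE expr2 mul0r. Qed.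

Lemma grad_entry {R : realType} {d : nat} (L : 'rV[R]_d -> R) x i :
  grad L x 0 i = 'D_(ebasis R i) L x.
Proof. by rewrite /grad mxE. Qed.

Lemma euler {R : realType} {d : nat} (L : 'rV[R]_d -> R) x :
  scale_invariant L -> x != 0 -> differentiable L x ->
  dotp x (grad L x) = 0.
Proof.
move=> sL x0 dL.
have E : dotp x (grad L x) = 'D_x L x.
  by rewrite derive_partials //; apply: eq_bigr => i _; rewrite grad_entry.
rewrite E.
have -> : 'D_x L x = 'D_1 (fun t : R => L (x + t *: x)) 0.
  by rewrite derive_line scale0r addr0.
transitivity ('D_1 (cst (L x) : R -> R) 0); last exact: derive_cst.
apply: near_eq_derive; near=> t.
have h1 : -1 < t.
  near: t; exact: (lt_nbhsr (ltrN10 R)).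
rewrite /cst -{1}(scale1r x) -scalerDl sL //; lra.
Unshelve. all: by end_near. Qed.

Lemma taylor_bound {R : realType} {d : nat} (L : 'rV[R]_d -> R) x (c rho : R) :
  C2_off0 L -> scale_invariant L -> x != 0 -> 0 <= c -> 0 <= rho ->
  (forall y, enorm y = 1 -> specnorm (hess L y) <= rho) ->
  L (x - c *: grad L x) <= L x - c * enorm (grad L x) ^+ 2
     + rho * enorm (grad L x) ^+ 2 / enorm x ^+ 2 * c ^+ 2 / 2.
Proof.
move=> CL sL x0 c0 rho0 Hrho.
set g := grad L x; set v := - g.
have [dLx _ _] := CL x x0.
have hxv : dotp x v = 0 by rewrite /v dotpNr euler // oppr0.
have nx0 : 0 < enorm x by apply: enorm_gt0.
have hzz : forall s : R, dotp (x + s *: v) (x + s *: v) = enorm x ^+ 2 + s ^+ 2 * dotp v v.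
  move=> s; rewrite dotpDl !dotpDr !dotpZl !dotpZr (dotpC v x) hxv enorm_sq.
  by ring.
have hz : forall s : R, enorm x ^+ 2 <= enorm (x + s *: v) ^+ 2.
  move=> s; rewrite (enorm_sq (x + s *: v)) hzz lerDl.
  by apply: mulr_ge0; [apply: sqr_ge0 | apply: dotp_ge0].
have zne : forall s : R, x + s *: v != 0.
  move=> s; apply/eqP => h; have := hz s; rewrite h.
  have -> : enorm (0 : 'rV[R]_d) = 0.
    by rewrite /enorm big1 ?sqrtr0 // => i _; rewrite mxE expr2 mul0r.
  rewrite expr0n /=; have := mulr_gt0 nx0 nx0; rewrite -expr2; lra.
set p := fun i y => 'D_(ebasis R i) L y.
set psi := fun s : R => \sum_i v 0 i * p i (x + s *: v).
set Q := fun s : R => dotp v (v *m (hess L (x + s *: v))^T).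
have dphi : forall s : R, is_derive s 1 (fun t : R => L (x + t *: v)) (psi s).
  move=> s; have [dLz _ _] := CL _ (zne s).
  apply: DeriveDef; first by apply: derivable_line; exact: diff_derivable.
  by rewrite derive_line derive_partials.
have dpsi : forall s : R, is_derive s 1 psi (Q s).
  move=> s; have [_ dp _] := CL _ (zne s).
  have -> : psi = \sum_i (fun t : R => v 0 i * p i (x + t *: v)).
    by apply/funext => t; rewrite fct_sumE.
  have -> : Q s = \sum_i v 0 i * 'D_v (p i) (x + s *: v).
    rewrite /Q /dotp; apply: eq_bigr => i _; congr (_ * _).
    rewrite derive_partials; last exact: dp.
    rewrite mxE; apply: eq_bigr => j _; rewrite !mxE //.
  apply: is_derive_sum => i.
  have hb : is_derive s 1 (fun t : R => p i (x + t *: v)) ('D_v (p i) (x + s *: v)).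
    apply: DeriveDef; last exact: derive_line.
    by apply: derivable_line; apply: diff_derivable; exact: dp.
  have := is_deriveZ (v 0 i) hb; apply.
set M := rho * enorm v ^+ 2 / enorm x ^+ 2.
have hQ : forall s : R, Q s <= M.
  move=> s; set z := x + s *: v; set n := enorm z.
  have n0 : 0 < n by apply: enorm_gt0; exact: zne.
  set zh := n^-1 *: z.
  have hzh : enorm zh = 1.
    by rewrite enormZ ger0_norm ?invr_ge0 ?ltW // mulVf // gt_eqF.
  have zh0 : zh != 0.
    by apply/eqP => h; move: hzh; rewrite h enorm0 => /eqP; rewrite eq_sym oner_eq0.
  have ez : z = n *: zh by rewrite /zh scalerA mulfV ?gt_eqF // scale1r.
  have eQ : Q s = (n ^+ 2)^-1 * dotp v (v *m (hess L zh)^T).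
    rewrite /Q -/z {1}ez hess_scale //.
    have -> : ((n ^+ 2)^-1 *: hess L zh)^T = (n ^+ 2)^-1 *: (hess L zh)^T.
      by apply/matrixP => i j; rewrite !mxE.
    by rewrite -scalemxAr dotpZr.
  rewrite eQ.
  have q1 := quad_le (hess L zh) v.
  have q2 := Hrho _ hzh.
  have q3 : (n ^+ 2)^-1 <= (enorm x ^+ 2)^-1.
    rewrite lef_pV2 ?posrE ?exprn_gt0 //; exact: hz.
  have vv : 0 <= enorm v ^+ 2 by apply: sqr_ge0.
  have q4 : dotp v (v *m (hess L zh)^T) <= enorm v ^+ 2 * rho.
    apply: le_trans q1 _; apply: ler_wpM2l => //.
  have -> : M = (enorm x ^+ 2)^-1 * (enorm v ^+ 2 * rho) by rewrite /M; ring.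
  apply: le_trans (_ : (n ^+ 2)^-1 * (enorm v ^+ 2 * rho) <= _).
    by apply: ler_wpM2l => //; rewrite invr_ge0 exprn_ge0 // ltW.
  by apply: ler_wpM2r => //; apply: mulr_ge0.
have step1 : forall s : R, 0 <= s -> psi s <= psi 0 + M * s.
  move=> s s0.
  have hp : forall t : R, 0 < t < s -> 0 <= M + 2 * 0 * t - Q t.
    by move=> t _; have := hQ t; rewrite mulr0 mul0r addr0; lra.
  have H := @mono R (fun t => M * t + 0 * t ^+ 2 - psi t)
    (fun t => M + 2 * 0 * t - Q t) 0 s
    (fun t => poly_der M 0 t psi (Q t) (dpsi t)) hp s0.
  move: H => /=; rewrite ?expr0n /= ?mul0r ?mulr0 ?add0r ?sub0r; lra.
have ps0 : psi 0 = - enorm g ^+ 2.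
  rewrite /psi scale0r addr0 enorm_sq /dotp -sumrN; apply: eq_bigr => i _.
  by rewrite /v mxE /p -grad_entry -/g mulNr.
have evg : enorm v = enorm g by rewrite /v -scaleN1r enormZ normrN normr1 mul1r.
have hp2 : forall t : R, 0 < t < c -> 0 <= psi 0 + 2 * (M / 2) * t - psi t.
  move=> t /andP [t0 _]; have := step1 t (ltW t0).
  have -> : 2 * (M / 2) = M by field.
  lra.
have H2 := @mono R (fun t => psi 0 * t + (M / 2) * t ^+ 2 - L (x + t *: v))
    (fun t => psi 0 + 2 * (M / 2) * t - psi t) 0 c
    (fun t => poly_der (psi 0) (M / 2) t (fun t => L (x + t *: v)) (psi t) (dphi t))
    hp2 c0.
move: H2 => /=; rewrite scale0r addr0 !mulr0 expr0n /= mulr0 !add0r.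
have -> : x - c *: g = x + c *: v by rewrite /v scalerN.
have e3 : M / 2 * c ^+ 2 = rho * enorm g ^+ 2 / enorm x ^+ 2 * c ^+ 2 / 2.
  by rewrite /M evg; ring.
rewrite e3 ps0; lra.
Qed.


Local Open Scope classical_set_scope.
Local Open Scope ring_scope.

Lemma enorm_continuous {R : realType} {d : nat} : continuous (@enorm R d).
Proof.
move=> v; rewrite /enorm.
apply: (continuous_comp (f := fun v : 'rV[R]_d => \sum_i v 0 i ^+ 2) (g := Num.sqrt)).
  apply: (@continuous_big _ _ _ _ _ add_continuous).
  move=> i _ w.
  have -> : (fun v : 'rV[R]_d => v 0 i ^+ 2) = (fun v => v 0 i) \* (fun v => v 0 i).
    by apply/funext => u; rewrite /= expr2.
  by apply: continuousM; apply: coord_continuous.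
exact: sqrt_continuous.
Qed.

Lemma sphere_compact {R : realType} {d : nat} :
  compact [set x : 'rV[R]_d | enorm x = 1].
Proof.
apply: bounded_closed_compact.
  exists 1; split; first exact: num_real.
  move=> M M1 v /= Kv.
  rewrite [`|v|]/Num.Def.normr /= mx_normrE; apply/bigmax_leP; split; first lra.
  case=> i j _ /=; rewrite (ord1 i).
  by apply: le_trans (coord_le1 _ j Kv) _; apply: ltW.
apply: (@preimage_closed _ _ (@enorm R d) [set x : R | x = 1]).
  by move=> x _; apply: enorm_continuous.
exact: closed_eq.
Qed.

Lemma rho_ub {R : realType} {d : nat} (L : 'rV[R]_d -> R) :
  C2_off0 L ->
  has_ubound [set specnorm (hess L x) | x in [set x : 'rV[R]_d | enorm x = 1]].
Proof.
move=> CL.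
case: d L CL => [|d] L CL.
  exists 0 => y [x /= Kx _]; exfalso; move: Kx.
  have -> : x = 0 by apply/rowP => -[].
  by rewrite enorm0 => /eqP; rewrite eq_sym oner_eq0.
have d0 : (0 < d.+1)%N by [].
set K := [set x : 'rV[R]_d.+1 | enorm x = 1].
have cK : compact K by exact: sphere_compact.
have cH : compact (hess L @` K).
  apply: continuous_compact => //.
  apply/continuous_in_subspaceT => z /[1!inE] zK.
  have z0 : z != 0.
    by apply/eqP => h; move: zK; rewrite /K /= h enorm0 => /eqP; rewrite eq_sym oner_eq0.
  by have [_ _ H] := CL z z0.
have [M [Mr HM]] := compact_bounded cH.
have M1 : M < M + 1 by rewrite ltrDl ltr01.
have HB := HM (M + 1) M1.

have HB' : forall y, K y -> forall i j, `|hess L y i j| <= M + 1.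
  move=> y Ky i j; apply: le_trans (HB _ (imageP _ Ky)).
  rewrite [leRHS]/Num.Def.normr /= mx_normrE; apply/bigmax_geP; right => /=.
  by exists (i, j).
exists (Num.sqrt (\sum_(j < d.+1) (\sum_(i < d.+1) (M + 1)) ^+ 2)).
move=> _ [y Ky <-]; apply: le_trans (specnorm_le _ d0) _.
apply: ler_wsqrtr; apply: ler_sum => j _.
have a0 : 0 <= \sum_i `|hess L y j i| by apply: sumr_ge0.
have ab : \sum_i `|hess L y j i| <= \sum_(i < d.+1) (M + 1).
  by apply: ler_sum => i _; apply: HB'.
nra.
Qed.

Lemma rho_ge {R : realType} {d : nat} (L : 'rV[R]_d -> R) y :
  C2_off0 L -> enorm y = 1 -> specnorm (hess L y) <= rho L.
Proof. by move=> CL hy; rewrite /rho; apply: (ub_le_sup (rho_ub L CL)); exists y. Qed.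

Lemma rho_ge0 {R : realType} {d : nat} (L : 'rV[R]_d -> R) :
  (0 < d)%N -> C2_off0 L -> 0 <= rho L.
Proof.
move=> d0 CL; apply: le_trans (specnorm_ge0 (hess L (ebasis R (Ordinal d0))) d0) _.
by apply: rho_ge => //; apply: enorm_ebasis.
Qed.


Local Close Scope classical_set_scope.

Lemma dim_pos {R : realType} {d : nat} (x : 'rV[R]_d) : x != 0 -> (0 < d)%N.
Proof.
case: d x => [x|//].
by rewrite (_ : x = 0) ?eqxx //; apply/rowP => -[].
Qed.

Lemma arith1 {R : realType} (e b r X G : R) : 0 < b -> 0 < X ->
  e * (b^-1 - r * e / (2 * X * b ^+ 2)) * G =
  (e / b) * G - r * G / X * (e / b) ^+ 2 / 2.
Proof. by move=> b0 X0; field; rewrite !gt_eqF. Qed.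

Lemma arith2 {R : realType} (e a r X G : R) :
  0 < e -> 0 < a -> a <= 2^-1 -> 0 <= r -> 0 < X -> 0 <= G ->
  e * (1 - 2 * r * e / X) * G <=
  e * ((1 - a)^-1 - r * e / (2 * X * (1 - a) ^+ 2)) * G.
Proof.
move=> e0 a0 ah r0 X0 G0.
have h2 : (2:R)^-1 = 1/2 by rewrite div1r.
have b0 : 0 < 1 - a by rewrite h2 in ah; lra.
set u := (1 - a)^-1.
have ub : u * (1 - a) = 1 by rewrite /u mulVf // gt_eqF.
have u0 : 0 < u by rewrite /u invr_gt0.
have u1 : 1 <= u by rewrite h2 in ah; nra.
have u2 : u <= 2 by rewrite h2 in ah; nra.
set k := r * e / X.
have k0 : 0 <= k by rewrite /k; apply: divr_ge0 => //; [apply: mulr_ge0; lra | lra].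
have e1 : r * e / (2 * X * (1 - a) ^+ 2) = k * u ^+ 2 / 2.
  by rewrite /k /u; field; rewrite ?gt_eqF.
have e2 : 2 * r * e / X = 2 * k by rewrite /k; ring.
rewrite e1 e2; apply: ler_wpM2r => //; apply: ler_wpM2l; first lra.
have h : 0 <= k * (4 - u ^+ 2) by apply: mulr_ge0 => //; nra.
lra.
Qed.

Theorem mainTheorem2 (R : realType) (d : nat) (L : 'rV[R]_d -> R)
  (eta lambda : R) (xt xt1 : 'rV[R]_d) :
  C2_off0 L -> scale_invariant L ->
  0 < eta -> 0 < lambda -> eta * lambda < 1 ->
  xt != 0 ->
  xt1 = (1 - eta * lambda) *: xt - eta *: grad L xt ->
  L xt - L xt1 >=
    eta * ((1 - eta * lambda)^-1
           - rho L * eta / (2 * enorm xt ^+ 2 * (1 - eta * lambda) ^+ 2))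
        * enorm (grad L xt) ^+ 2
  /\
  (eta * lambda <= 2^-1 ->
   L xt - L xt1 >=
     eta * (1 - 2 * rho L * eta / enorm xt ^+ 2) * enorm (grad L xt) ^+ 2).
Proof.
move=> CL sL e0 l0 el1 x0 hx1.
have d0 := dim_pos _ x0.
have r0 := rho_ge0 L d0 CL.
set g := grad L xt.
set b := 1 - eta * lambda.
have a0 : 0 < eta * lambda by apply: mulr_gt0.
have b0 : 0 < b by rewrite /b; lra.
set c := eta / b.
have c0 : 0 <= c by rewrite /c; apply: divr_ge0; lra.
have [dLx _ _] := CL xt x0.
have nx0 : 0 < enorm xt by apply: enorm_gt0.
have bc : b * c = eta by rewrite /c mulrC divfK // gt_eqF.
have ez : xt1 = b *: (xt - c *: g).
  by rewrite hx1 scalerBr scalerA bc.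
have z0 : xt - c *: g != 0.
  apply/eqP => h.
  have : dotp (xt - c *: g) xt = enorm xt ^+ 2.
    by rewrite dotpDl dotpNl dotpZl (dotpC g) euler // mulr0 subr0 enorm_sq.
  rewrite h /dotp big1 => [|i _]; last by rewrite mxE mul0r.
  have := mulr_gt0 nx0 nx0; rewrite -expr2; lra.
have hL1 : L xt1 = L (xt - c *: g) by rewrite ez sL.
have T := taylor_bound L xt c (rho L) CL sL x0 c0 r0 (fun y hy => rho_ge L y CL hy).
have p1 : eta * (b^-1 - rho L * eta / (2 * enorm xt ^+ 2 * b ^+ 2)) * enorm g ^+ 2
          <= L xt - L xt1.
  rewrite arith1 ?exprn_gt0 // hL1 -/c; move: T; rewrite -/g; lra.
split => // hal.
apply: le_trans p1.
apply: arith2 => //; [exact: exprn_gt0 | exact: sqr_ge0].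
Qed.
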